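(* In the between-ride routing problem described in the context (with the standing assumptions there), there exists an optimal stationary policy $\mu^*$ such that (i) for every $i\in N$, $\mu^*_1(i)=i$ implies $\mu^*_2(i)=\infty$, and (ii) $\mu^*$ has no cycles with probability 1: for every starting node, every $i\in N$ and all distinct stages $k\neq k'$, $\mathbb{P}(x_k=i,\,x_{k'}=i)=0$. Equivalently, the successor map $i\mapsto \mu^*_1(i)$ on $N$ has no directed cycle through two or more distinct nodes, and every self-loop of it is an indefinite wait. In particular, under $\mu^*$ every node is visited at most once, so the process reaches $m$ within at most $n$ decision stages (counting a final indefinite wait or quit as a stage).
   Context: Road network: a directed, connected graph $G=(N,E)$ with $|N|=n$, containing every loop $(i,i)$, $i\in N$. Constants: wage rate $w>0$ and fuel/vehicle cost per unit distance $f>0$. Each edge $e\in E$ has a ride-request rate $Q_e>0$ and expected ride profit $R_e>0$; each non-loop edge $e=(i,j)$, $j\neq i$, has a traversal time $T_e>0$ and speed $S_e>0$; loops have $S_{(i,i)}=0$. Markov decision problem: the state space is $X=N\cup\{m\}$, where $m$ is an absorbing terminal state (ride found or driver quits) with zero reward. At $i\in N$ an action is a pair $u=(u_1,u_2)$ with $u_1\in\{j:(i,j)\in E\}\cup\{m\}$; if $u_1=i$ (waiting) then $u_2=t\in(0,\infty]$ is freely chosen; if $u_1=j\neq i$ then $u_2=t=T_{(i,j)}$. For $u_1=j\in N$ and $e=(i,j)$: the next state is $m$ with probability $1-e^{-tQ_e}$ and $j$ with probability $e^{-tQ_e}$, and the expected stage reward is $g(i,u)=(1-e^{-tQ_e})\bigl(R_e-\frac{w+fS_e}{Q_e}\bigr)$;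 for $t=\infty$ these quantities are defined as the limits as $t\to\infty$ (so waiting forever at $i$ yields reward $R_{(i,i)}-w/Q_{(i,i)}$ and moves to $m$ with probability 1). For $u_1=m$ (quitting) the next state is $m$ with probability 1 and the reward is $0$. A policy prescribes an action for each state at each stage; it is stationary if the same map $\mu:i\mapsto(\mu_1(i),\mu_2(i))$ is used at every stage. The value of a policy $\pi$ from $x_0$ is $J_\pi(x_0)=\lim_{K\to\infty}\mathbb{E}\bigl[\sum_{k=0}^{K-1} g(x_k,\pi_k(x_k))\bigr]$; a policy is optimal if it attains $J^*(x)=\sup_\pi J_\pi(x)$ for every $x\in N$. $x_k$ denotes the state at stage $k$. Standing assumption: for every non-loop edge $e=(j,k)$, $R_e-\frac{w}{Q_e}\le\max_{i\in\{j,k\}}\bigl\{R_{(i,i)}-\frac{w}{Q_{(i,i)}}\bigr\}$. *)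

(* Defs.v *)
From Stdlib Require Import Reals List Relations.
Open Scope R_scope.

(* Nodes are the naturals 0..n-1; the terminal state m is [None] in [option nat].
   Edge data Q R T S are functions nat -> nat -> R, read at e = (i,j). *)

(* An action u = (u1,u2): u1 = None means "quit" (go to m), u1 = Some j means
   "go to j" (j = i: wait); u2 = None means t = infinity, u2 = Some t a finite t. *)
Definition action : Type := (option nat * option R)%type.

Definition policy : Type := nat -> nat -> action.

Definition adm (E : nat -> nat -> Prop) (T : nat -> nat -> R) (i : nat) (u : action) : Prop :=
  match fst u with
  | None => True
  | Some j =>
      E i j /\
      (if Nat.eq_dec j i
       then match snd u with None => True | Some t => 0 < t end
       else snd u = Some (T i j))
  end.

Definition admissible (n : nat) (E : nat -> nat -> Prop) (T : nat -> nat -> R)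
  (pi : policy) : Prop :=
  forall k i, (i < n)%nat -> adm E T i (pi k i).

(* probability 1 - e^{-t Q_e} of moving to m (limit 1 when t = infinity) *)
Definition pm (Q : nat -> nat -> R) (i : nat) (u : action) : R :=
  match u with
  | (None, _) => 1
  | (Some _, None) => 1
  | (Some j, Some t) => 1 - exp (- (t * Q i j))
  end.

Definition trans (Q : nat -> nat -> R) (i : nat) (u : action) (y : option nat) : R :=
  match fst u with
  | None => match y with None => 1 | Some _ => 0 end
  | Some j =>
      match y with
      | None => pm Q i u
      | Some y' => if Nat.eq_dec y' j then 1 - pm Q i u else 0
      end
  end.

Definition reward (w f : R) (Q Rw S : nat -> nat -> R) (i : nat) (u : action) : R :=
  match fst u with
  | None => 0
  | Some j => pm Q i u * (Rw i j - (w + f * S i j) / Q i j)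
  end.

Definition sumN (n : nat) (F : nat -> R) : R := fold_right Rplus 0 (map F (seq 0 n)).

Definition step (n : nat) (Q : nat -> nat -> R) (a : nat -> action)
  (d : option nat -> R) : option nat -> R :=
  fun y =>
    match y with
    | None => d None + sumN n (fun i => d (Some i) * trans Q i (a i) None)
    | Some j => sumN n (fun i => d (Some i) * trans Q i (a i) (Some j))
    end.

Definition ind_node (x : nat) (y : option nat) : R :=
  match y with Some y' => if Nat.eq_dec y' x then 1 else 0 | None => 0 end.

(* Weighted (path-summed) measure at stage k: sum over all trajectories
   x_0 = x0, x_1, ..., x_k of the trajectory probability times
   h 0 x_0 * ... * h k x_k, as a function of x_k. *)
Fixpoint wdist (n : nat) (Q : nat -> nat -> R) (pi : policy) (x0 : nat)
  (h : nat -> option nat -> R) (k : nat) : option nat -> R :=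
  match k with
  | O => fun y => ind_node x0 y * h O y
  | S k' => fun y => step n Q (pi k') (wdist n Q pi x0 h k') y * h k y
  end.

Definition mass (n : nat) (d : option nat -> R) : R := d None + sumN n (fun i => d (Some i)).

Definition state_dist n Q pi x0 k : option nat -> R := wdist n Q pi x0 (fun _ _ => 1) k.

(* P(x_k = i, x_k' = i) from x_0 = x0 *)
Definition prob_both (n : nat) (Q : nat -> nat -> R) (pi : policy) (x0 i k k' : nat) : R :=
  mass n (wdist n Q pi x0
            (fun s y => if (Nat.eqb s k || Nat.eqb s k')%bool then ind_node i y else 1)
            (Nat.max k k')).

(* E[ sum_{k<K} g(x_k, pi_k(x_k)) ]  (m has zero reward) *)
Definition partial_value (n : nat) (w f : R) (Q Rw S : nat -> nat -> R)
  (pi : policy) (x0 K : nat) : R :=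
  sumN K (fun k => sumN n (fun i => state_dist n Q pi x0 k (Some i) * reward w f Q Rw S i (pi k i))).

Definition value_is n w f Q Rw S pi x0 (v : R) : Prop :=
  Un_cv (partial_value n w f Q Rw S pi x0) v.

Definition stat (mu : nat -> action) : policy := fun _ => mu.

Definition optimal_stationary n (E : nat -> nat -> Prop) w f (Q Rw T S : nat -> nat -> R)
  (mu : nat -> action) : Prop :=
  admissible n E T (stat mu) /\
  forall x0, (x0 < n)%nat ->
    exists v, value_is n w f Q Rw S (stat mu) x0 v /\
      forall (pi : policy) v', admissible n E T pi ->
        value_is n w f Q Rw S pi x0 v' -> v' <= v.

(* Main.v *)
Require Import Defs.
From Stdlib Require Import Reals List Relations Lia Lra Classical.
Open Scope R_scope.

Lemma fold_plus_acc (l : list R) (a : R) :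
  fold_right Rplus a l = fold_right Rplus 0 l + a.
Proof. induction l; simpl; [ring | rewrite IHl; ring]. Qed.

Lemma sumN_0 F : sumN 0 F = 0.
Proof. reflexivity. Qed.

Lemma sumN_S m F : sumN (S m) F = sumN m F + F m.
Proof.
  unfold sumN. rewrite seq_S, map_app, fold_right_app. simpl.
  rewrite fold_plus_acc. ring.
Qed.

Lemma sumN_ext m F G : (forall i, (i < m)%nat -> F i = G i) -> sumN m F = sumN m G.
Proof.
  induction m; intros H; [reflexivity|]. rewrite !sumN_S, IHm, H; auto.
Qed.

Lemma sumN_le m F G : (forall i, (i < m)%nat -> F i <= G i) -> sumN m F <= sumN m G.
Proof.
  induction m; intros H; [rewrite !sumN_0; lra|]. rewrite !sumN_S.
  assert (F m <= G m) by auto. assert (sumN m F <= sumN m G) by (apply IHm; auto). lra.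
Qed.

Lemma sumN_nonneg m F : (forall i, (i < m)%nat -> 0 <= F i) -> 0 <= sumN m F.
Proof.
  intros H. replace 0 with (sumN m (fun _ => 0)). apply sumN_le; auto.
  induction m; [reflexivity|]. rewrite sumN_S, IHm; [ring|]. auto.
Qed.

Lemma sumN_zero m F : (forall i, (i < m)%nat -> F i = 0) -> sumN m F = 0.
Proof.
  induction m; intros H; [reflexivity|]. rewrite sumN_S, IHm, H; auto; ring.
Qed.

Lemma sumN_nz m F : sumN m F <> 0 -> exists i, (i < m)%nat /\ F i <> 0.
Proof.
  intros H. apply NNPP. intro C. apply H. apply sumN_zero.
  intros i Hi. apply NNPP. intro D. apply C. eauto.
Qed.

Lemma sumN_plus m F G : sumN m (fun i => F i + G i) = sumN m F + sumN m G.
Proof. induction m; [simpl; unfold sumN; simpl; ring|]. rewrite !sumN_S, IHm. ring. Qed.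

Lemma sumN_scal_r m F c : sumN m F * c = sumN m (fun i => F i * c).
Proof. induction m; [unfold sumN; simpl; ring|]. rewrite !sumN_S, <- IHm. ring. Qed.

Lemma sumN_scal_l m F c : c * sumN m F = sumN m (fun i => c * F i).
Proof. induction m; [unfold sumN; simpl; ring|]. rewrite !sumN_S, <- IHm. ring. Qed.

Lemma sumN_swap a b (F : nat -> nat -> R) :
  sumN a (fun i => sumN b (fun j => F i j)) = sumN b (fun j => sumN a (fun i => F i j)).
Proof.
  induction a.
  - rewrite sumN_0. symmetry. apply sumN_zero. intros. apply sumN_0.
  - rewrite sumN_S, IHa.
    rewrite <- sumN_plus. apply sumN_ext. intros. rewrite sumN_S. ring.
Qed.

Lemma sumN_delta m c (G : nat -> R) : (c < m)%nat ->
  sumN m (fun i => if Nat.eq_dec i c then G i else 0) = G c.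
Proof.
  induction m; intros H; [lia|]. rewrite sumN_S.
  destruct (Nat.eq_dec m c).
  - subst. rewrite sumN_zero. ring. intros i Hi. destruct (Nat.eq_dec i c); [lia|auto].
  - rewrite IHm by lia. ring.
Qed.

Lemma exp_neg_le1 x : 0 <= x -> exp (- x) <= 1.
Proof.
  intros H. rewrite <- exp_0. destruct (Req_dec x 0).
  - subst. rewrite Ropp_0. lra.
  - left. apply exp_increasing. lra.
Qed.

Lemma trans_nonneg Q i u y : 0 <= trans Q i u (Some y).
Proof.
  destruct u as [[j|] [t|]]; unfold trans, pm; simpl; try lra.
  - destruct (Nat.eq_dec y j); try lra. pose proof (exp_pos (- (t * Q i j))). lra.
  - destruct (Nat.eq_dec y j); lra.
Qed.

Lemma lim_le u l c : Un_cv u l -> (forall k, u k <= c) -> l <= c.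
Proof.
  intros Hu Hc. destruct (Rle_dec l c) as [|Hn]; auto. exfalso.
  destruct (Hu (l - c)) as [N HN]; [lra|].
  specialize (HN N (le_n N)). unfold R_dist in HN. apply Rabs_def2 in HN.
  specialize (Hc N). lra.
Qed.

Section Main.
Variables (n : nat) (E : nat -> nat -> Prop) (w f : R) (Q Rw T S : nat -> nat -> R).
Hypotheses
  (hE_dom : forall i j, E i j -> (i < n)%nat /\ (j < n)%nat)
  (hE_loop : forall i, (i < n)%nat -> E i i)
  (hf : 0 < f)
  (hQ : forall i j, E i j -> 0 < Q i j)
  (hT : forall i j, E i j -> i <> j -> 0 < T i j)
  (hS : forall i j, E i j -> i <> j -> 0 < S i j)
  (hSloop : forall i, (i < n)%nat -> S i i = 0)
  (hstand : forall j k, E j k -> j <> k ->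
     Rw j k - w / Q j k <= Rmax (Rw j j - w / Q j j) (Rw k k - w / Q k k)).

Definition val (V : nat -> R) i (u : action) : R :=
  reward w f Q Rw S i u + match fst u with Some j => (1 - pm Q i u) * V j | None => 0 end.

Definition waitval i := Rw i i - (w + f * S i i) / Q i i.

Lemma val_wait V i : val V i (Some i, None) = waitval i.
Proof. unfold val, reward, pm, waitval; simpl. ring. Qed.

Lemma val_quit V i : val V i (None, None) = 0.
Proof. unfold val, reward; simpl. ring. Qed.

Lemma move_bound V i j X : E i j -> i <> j -> waitval i <= X -> waitval j <= X -> V j <= X ->
  val V i (Some j, Some (T i j)) <= X.
Proof.
  intros Hij Hne Hi Hj HV.
  destruct (hE_dom _ _ Hij) as [Hin Hjn].
  assert (HQ := hQ _ _ Hij). assert (HT := hT _ _ Hij Hne). assert (HS := hS _ _ Hij Hne).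
  pose proof (hstand _ _ Hij Hne) as Hst.
  unfold waitval in Hi, Hj. rewrite hSloop in Hi, Hj by auto.
  replace (w + f * 0) with w in Hi, Hj by ring.
  assert (Hb : Rw i j - (w + f * S i j) / Q i j <= X).
  { assert (w / Q i j <= (w + f * S i j) / Q i j).
    { unfold Rdiv. apply Rmult_le_compat_r. left; apply Rinv_0_lt_compat; lra.
      assert (0 < f * S i j) by (apply Rmult_lt_0_compat; lra). lra. }
    assert (Rmax (Rw i i - w / Q i i) (Rw j j - w / Q j j) <= X) by (apply Rmax_lub; auto).
    lra. }
  unfold val, reward, pm; simpl.
  set (e := exp (- (T i j * Q i j))).
  assert (0 < e) by apply exp_pos.
  assert (e <= 1) by (apply exp_neg_le1; left; apply Rmult_lt_0_compat; lra).
  assert ((1 - e) * (Rw i j - (w + f * S i j) / Q i j) <= (1 - e) * X)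
    by (apply Rmult_le_compat_l; lra).
  assert ((1 - (1 - e)) * V j <= (1 - (1 - e)) * X) by (apply Rmult_le_compat_l; lra).
  lra.
Qed.

Definition isopt (l : list nat) i (o : action) : Prop :=
  o = (None, None) \/ o = (Some i, None) \/
  exists j, In j l /\ E i j /\ j <> i /\ o = (Some j, Some (T i j)).

Lemma isopt_cons l j i o : isopt l i o -> isopt (j :: l) i o.
Proof.
  unfold isopt. intros [H|[H|[k [H1 H2]]]]; auto. right; right; exists k; simpl; auto.
Qed.

Lemma isopt_cons_inv l u i o : isopt (u :: l) i o ->
  isopt l i o \/ (E i u /\ u <> i /\ o = (Some u, Some (T i u))).
Proof.
  unfold isopt. intros [H|[H|[k [[H1|H1] H2]]]]; auto.
  - subst; tauto.
  - left; right; right; exists k; auto.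
Qed.

Lemma val_ext_opt l V1 V2 i o : isopt l i o -> (forall j, In j l -> V1 j = V2 j) ->
  val V1 i o = val V2 i o.
Proof.
  intros [H|[H|[j [H1 [H2 [H3 H4]]]]]] HV; subst; unfold val, reward, pm; simpl; try ring.
  rewrite HV; auto.
Qed.

Lemma best_opt V l i : exists o, isopt l i o /\ forall o', isopt l i o' -> val V i o' <= val V i o.
Proof.
  induction l as [|j l IH].
  - destruct (Rle_dec 0 (waitval i)).
    + exists (Some i, None). split. unfold isopt; auto.
      intros o' [H|[H|[k [Hk _]]]]; subst; rewrite ?val_quit, ?val_wait; try lra. destruct Hk.
    + exists (None, None). split. unfold isopt; auto.
      intros o' [H|[H|[k [Hk _]]]]; subst; rewrite ?val_quit, ?val_wait; try lra. destruct Hk.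
  - destruct IH as [o [Ho Hmax]].
    destruct (classic (E i j /\ j <> i)) as [[Hij Hne]|Hn].
    + destruct (Rle_dec (val V i (Some j, Some (T i j))) (val V i o)).
      * exists o. split. apply isopt_cons; auto.
        intros o' Ho'. apply isopt_cons_inv in Ho'. destruct Ho' as [Ho'|[_ [_ ->]]]; auto.
      * exists (Some j, Some (T i j)). split.
        right; right; exists j; simpl; auto.
        intros o' Ho'. apply isopt_cons_inv in Ho'. destruct Ho' as [Ho'|[_ [_ ->]]]; [|lra].
        specialize (Hmax _ Ho'). lra.
    + exists o. split. apply isopt_cons; auto.
      intros o' Ho'. apply isopt_cons_inv in Ho'. destruct Ho' as [Ho'|[H1 [H2 _]]]; auto.
      exfalso; auto.
Qed.

Lemma best_node V l cs : (exists c, In c cs /\ (c < n)%nat /\ ~ In c l) ->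
  exists u o, (u < n)%nat /\ ~ In u l /\ isopt l u o /\
    forall w0 o', In w0 cs -> (w0 < n)%nat -> ~ In w0 l -> isopt l w0 o' -> val V w0 o' <= val V u o.
Proof.
  induction cs as [|c cs IH]; intros Hex.
  - destruct Hex as [c [[] _]].
  - destruct (classic (exists c', In c' cs /\ (c' < n)%nat /\ ~ In c' l)) as [Hy|Hn].
    + destruct (IH Hy) as [u [o [Hu [Hul [Ho Hmax]]]]].
      destruct (classic ((c < n)%nat /\ ~ In c l)) as [[Hc Hcl]|Hc].
      * destruct (best_opt V l c) as [oc [Hoc Hmc]].
        destruct (Rle_dec (val V c oc) (val V u o)).
        -- exists u, o. repeat split; auto. intros w0 o' [<-|Hin] Hw Hwl Ho'; auto.
           specialize (Hmc _ Ho'). lra.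
        -- exists c, oc. repeat split; auto. intros w0 o' [<-|Hin] Hw Hwl Ho'; auto.
           specialize (Hmax _ _ Hin Hw Hwl Ho'). lra.
      * exists u, o. repeat split; auto. intros w0 o' [<-|Hin] Hw Hwl Ho'; auto.
        exfalso; auto.
    + assert (Hc : (c < n)%nat /\ ~ In c l).
      { destruct Hex as [c' [[<-|Hin] H]]; auto. exfalso; eauto. }
      destruct Hc as [Hc Hcl].
      destruct (best_opt V l c) as [oc [Hoc Hmc]].
      exists c, oc. repeat split; auto. intros w0 o' [<-|Hin] Hw Hwl Ho'; auto.
      exfalso; eauto.
Qed.

Definition Inv (l : list nat) (V : nat -> R) (mu : nat -> action) (rk : nat -> nat) : Prop :=
  NoDup l /\ (forall x, In x l -> (x < n)%nat) /\
  (forall i, In i l -> 0 <= V i /\ (forall o, isopt l i o -> val V i o <= V i) /\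
     isopt l i (mu i) /\ V i = val V i (mu i) /\ (rk i < length l)%nat /\
     (forall j, fst (mu i) = Some j -> j <> i -> (rk j < rk i)%nat)) /\
  (forall i w0 o, In i l -> (w0 < n)%nat -> ~ In w0 l -> isopt l w0 o -> val V w0 o <= V i).

Lemma Inv_nil V mu rk : Inv nil V mu rk.
Proof. repeat split; try constructor; intros; simpl in *; tauto. Qed.

Lemma Inv_step l V mu rk : Inv l V mu rk -> (exists u0, (u0 < n)%nat /\ ~ In u0 l) ->
  exists u V' mu' rk', Inv (u :: l) V' mu' rk'.
Proof.
  intros [Hnd [Hlt [H1 H2]]] Hex.
  destruct (best_node V l (seq 0 n)) as [u [o [Hu [Hul [Ho Hmax]]]]].
  { destruct Hex as [u0 [? ?]]. exists u0. split; auto. apply in_seq. lia. }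
  assert (Hmax' : forall w0 o', (w0 < n)%nat -> ~ In w0 l -> isopt l w0 o' -> val V w0 o' <= val V u o).
  { intros. apply Hmax; auto. apply in_seq. lia. }
  clear Hmax.
  set (m := val V u o).
  set (V' := fun x => if Nat.eq_dec x u then m else V x).
  set (mu' := fun x => if Nat.eq_dec x u then o else mu x).
  set (rk' := fun x => if Nat.eq_dec x u then length l else rk x).
  assert (HV'l : forall j, In j l -> V' j = V j).
  { intros j Hj. unfold V'. destruct (Nat.eq_dec j u); auto. subst; tauto. }
  assert (HV'u : V' u = m). { unfold V'. destruct (Nat.eq_dec u u); tauto. }
  assert (Hvalext : forall i o', isopt l i o' -> val V' i o' = val V i o').
  { intros. eapply val_ext_opt; eauto. }
  assert (Hmi : forall i, In i l -> m <= V i).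
  { intros i Hi. apply (H2 i u o); auto. }
  assert (Hwu : waitval u <= m).
  { rewrite <- (val_wait V u). apply Hmax'; auto. unfold isopt; auto. }
  assert (Hm0 : 0 <= m).
  { rewrite <- (val_quit V u). apply Hmax'; auto. unfold isopt; auto. }
  exists u, V', mu', rk'.
  split; [constructor; auto|]. split.
  { intros x [<-|Hx]; auto. }
  split.
  - intros i [<-|Hi].
    + unfold mu', rk'. destruct (Nat.eq_dec u u) as [_|]; [|tauto].
      rewrite HV'u. split; auto. split.
      { intros o' Ho'. apply isopt_cons_inv in Ho'. destruct Ho' as [Ho'|[_ [Hne _]]]; [|tauto].
        rewrite Hvalext by auto. apply Hmax'; auto. }
      split. apply isopt_cons; auto.
      split. rewrite Hvalext by auto. reflexivity.
      split. simpl; lia.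
      intros j Hj Hne. destruct Ho as [Ho|[Ho|[j' [Hj' [_ [_ Ho]]]]]]; subst o; simpl in Hj;
        try discriminate.
      { inversion Hj; subst; tauto. }
      inversion Hj; subst j'. destruct (Nat.eq_dec j u); [tauto|].
      destruct (H1 j Hj') as [_ [_ [_ [_ [Hr _]]]]]. lia.
    + assert (Hiu : i <> u) by (intro; subst; tauto).
      destruct (H1 i Hi) as [HV0 [Hopt [Hmu [Heq [Hr Hrk]]]]].
      unfold mu', rk'. destruct (Nat.eq_dec i u); [tauto|].
      rewrite HV'l by auto. split; auto. split.
      { intros o' Ho'. apply isopt_cons_inv in Ho'.
        destruct Ho' as [Ho'|[HE [Hne ->]]].
        - rewrite Hvalext by auto. auto.
        - apply move_bound; auto.
          + rewrite <- (val_wait V i). apply Hopt. unfold isopt; auto.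
          + specialize (Hmi i Hi). lra.
          + rewrite HV'u. auto. }
      split. apply isopt_cons; auto.
      split. rewrite Hvalext by auto. auto.
      split. simpl; lia.
      intros j Hj Hne. destruct (Nat.eq_dec j u).
      * exfalso. subst j. destruct Hmu as [Hm|[Hm|[j' [Hj' [_ [_ Hm]]]]]]; rewrite Hm in Hj;
          simpl in Hj; try discriminate.
        inversion Hj; subst; tauto. inversion Hj; subst; tauto.
      * auto.
  - intros i w0 o' Hi Hw Hwl Ho'.
    assert (Hw0u : w0 <> u) by (intro; subst; simpl in Hwl; tauto).
    assert (Hwl' : ~ In w0 l) by (simpl in Hwl; tauto).
    assert (Hle : val V' w0 o' <= m).
    { apply isopt_cons_inv in Ho'. destruct Ho' as [Ho'|[HE [Hne ->]]].
      - rewrite Hvalext by auto. auto.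
      - apply move_bound; auto.
        + rewrite <- (val_wait V w0). apply Hmax'; auto. unfold isopt; auto.
        + lra. }
    destruct Hi as [<-|Hi]. lra.
    rewrite HV'l by auto. specialize (Hmi i Hi). lra.
Qed.

Lemma build : forall k, exists l V mu rk, Inv l V mu rk /\ ((k <= length l)%nat \/ forall u, (u < n)%nat -> In u l).
Proof.
  induction k.
  - exists nil, (fun _ => 0), (fun _ => (None, None)), (fun _ => O). split. apply Inv_nil. left; simpl; lia.
  - destruct IHk as [l [V [mu [rk [HI Hk]]]]].
    destruct (classic (exists u0, (u0 < n)%nat /\ ~ In u0 l)) as [Hy|Hn].
    + destruct (Inv_step l V mu rk HI Hy) as [u [V' [mu' [rk' HI']]]].
      exists (u :: l), V', mu', rk'. split; auto. destruct Hk as [Hk|Hk].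
      * left; simpl; lia.
      * exfalso. destruct Hy as [u0 [? ?]]; eauto.
    + exists l, V, mu, rk. split; auto. right. intros u Hu. apply NNPP. intro; eauto.
Qed.

Lemma build_full : exists l V mu rk, Inv l V mu rk /\ forall u, (u < n)%nat -> In u l.
Proof.
  destruct (build (Nat.succ n)) as [l [V [mu [rk [HI Hk]]]]].
  exists l, V, mu, rk. split; auto. destruct Hk as [Hk|Hk]; auto. exfalso.
  destruct HI as [Hnd [Hlt _]].
  assert (HL : (length l <= length (seq 0 n))%nat).
  { apply NoDup_incl_length; auto. intros x Hx. apply in_seq. specialize (Hlt x Hx). lia. }
  rewrite length_seq in HL. exact (Nat.nle_succ_diag_l n (Nat.le_trans _ _ _ Hk HL)).
Qed.

End Main.

Section Eval.
Variables (n : nat) (E : nat -> nat -> Prop) (w f : R) (Q Rw T Sv : nat -> nat -> R).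
Hypothesis (hE_dom : forall i j, E i j -> (i < n)%nat /\ (j < n)%nat).

Lemma adm_target i u : adm E T i u -> forall j, fst u = Some j -> (j < n)%nat.
Proof.
  unfold adm. intros H j Hj. rewrite Hj in H. destruct H as [H _]. apply (hE_dom _ _ H).
Qed.

Lemma trans_sum V i u : (forall j, fst u = Some j -> (j < n)%nat) ->
  sumN n (fun y => trans Q i u (Some y) * V y) = val w f Q Rw Sv V i u - reward w f Q Rw Sv i u.
Proof.
  intros Ht. unfold val. destruct u as [[j|] t]; unfold trans; simpl.
  - rewrite (sumN_ext _ _ (fun y => if Nat.eq_dec y j then (1 - pm Q i (Some j, t)) * V y else 0)).
    + rewrite sumN_delta. unfold pm; destruct t; ring. apply Ht; reflexivity.
    + intros y _. unfold pm; destruct t; destruct (Nat.eq_dec y j); ring.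
  - rewrite sumN_zero. ring. intros; ring.
Qed.

Definition D pi x0 V k := sumN n (fun i => state_dist n Q pi x0 k (Some i) * V i).

Lemma sd_S pi x0 k j : state_dist n Q pi x0 (Datatypes.S k) (Some j) =
  sumN n (fun i => state_dist n Q pi x0 k (Some i) * trans Q i (pi k i) (Some j)).
Proof. unfold state_dist. simpl. ring. Qed.

Lemma sd_nonneg pi x0 k i : 0 <= state_dist n Q pi x0 k (Some i).
Proof.
  revert i; induction k; intros i.
  - unfold state_dist; simpl. destruct (Nat.eq_dec i x0); lra.
  - rewrite sd_S. apply sumN_nonneg. intros j _.
    apply Rmult_le_pos; auto. apply trans_nonneg.
Qed.

Lemma D_S pi x0 V k : admissible n E T pi ->
  D pi x0 V (Datatypes.S k) = sumN n (fun i => state_dist n Q pi x0 k (Some i) *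
      (val w f Q Rw Sv V i (pi k i) - reward w f Q Rw Sv i (pi k i))).
Proof.
  intros Ha. unfold D.
  rewrite (sumN_ext _ _ (fun j => sumN n (fun i => state_dist n Q pi x0 k (Some i) * (trans Q i (pi k i) (Some j) * V j)))).
  2:{ intros j _. rewrite sd_S, sumN_scal_r. apply sumN_ext. intros; ring. }
  rewrite <- sumN_swap. apply sumN_ext. intros i Hi.
  rewrite <- sumN_scal_l. rewrite trans_sum; auto.
  apply (adm_target i). apply Ha; auto.
Qed.

Lemma D_0 pi x0 V : (x0 < n)%nat -> D pi x0 V 0 = V x0.
Proof.
  intros Hx. unfold D, state_dist. simpl.
  rewrite (sumN_ext _ _ (fun i => if Nat.eq_dec i x0 then V i else 0)).
  apply sumN_delta; auto.
  intros i _. destruct (Nat.eq_dec i x0); ring.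
Qed.

Lemma pv_S pi x0 K : partial_value n w f Q Rw Sv pi x0 (Datatypes.S K) =
  partial_value n w f Q Rw Sv pi x0 K +
  sumN n (fun i => state_dist n Q pi x0 K (Some i) * reward w f Q Rw Sv i (pi K i)).
Proof. unfold partial_value. apply sumN_S. Qed.

Lemma pv_bound pi x0 V : (x0 < n)%nat -> admissible n E T pi ->
  (forall k i, (i < n)%nat -> val w f Q Rw Sv V i (pi k i) <= V i) ->
  forall K, partial_value n w f Q Rw Sv pi x0 K + D pi x0 V K <= V x0.
Proof.
  intros Hx Ha Hb. induction K.
  - unfold partial_value. rewrite sumN_0, D_0; auto. lra.
  - rewrite pv_S, D_S; auto.
    assert (sumN n (fun i => state_dist n Q pi x0 K (Some i) * reward w f Q Rw Sv i (pi K i)) +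
            sumN n (fun i => state_dist n Q pi x0 K (Some i) *
              (val w f Q Rw Sv V i (pi K i) - reward w f Q Rw Sv i (pi K i))) <= D pi x0 V K).
    { rewrite <- sumN_plus. apply sumN_le. intros i Hi.
      pose proof (sd_nonneg pi x0 K i). specialize (Hb K i Hi).
      replace (state_dist n Q pi x0 K (Some i) * reward w f Q Rw Sv i (pi K i) +
        state_dist n Q pi x0 K (Some i) * (val w f Q Rw Sv V i (pi K i) - reward w f Q Rw Sv i (pi K i)))
        with (state_dist n Q pi x0 K (Some i) * val w f Q Rw Sv V i (pi K i)) by ring.
      apply Rmult_le_compat_l; auto. }
    lra.
Qed.

Lemma pv_eq pi x0 V : (x0 < n)%nat -> admissible n E T pi ->
  (forall k i, (i < n)%nat -> val w f Q Rw Sv V i (pi k i) = V i) ->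
  forall K, partial_value n w f Q Rw Sv pi x0 K + D pi x0 V K = V x0.
Proof.
  intros Hx Ha Hb. induction K.
  - unfold partial_value. rewrite sumN_0, D_0; auto. lra.
  - rewrite pv_S, D_S; auto. rewrite <- IHK. unfold D.
    rewrite Rplus_assoc, <- sumN_plus. f_equal. apply sumN_ext. intros i Hi.
    rewrite Hb; auto. ring.
Qed.

Lemma D_nonneg pi x0 V k : (forall i, (i < n)%nat -> 0 <= V i) -> 0 <= D pi x0 V k.
Proof.
  intros H. unfold D. apply sumN_nonneg. intros. apply Rmult_le_pos; auto. apply sd_nonneg.
Qed.

Variables (mu : nat -> action) (rk : nat -> nat).
Hypothesis Hmu : forall i y, (i < n)%nat -> trans Q i (mu i) (Some y) <> 0 -> (rk y < rk i)%nat.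

Lemma wd_S x0 h s y : wdist n Q (stat mu) x0 h (Datatypes.S s) (Some y) =
  sumN n (fun i => wdist n Q (stat mu) x0 h s (Some i) * trans Q i (mu i) (Some y)) * h (Datatypes.S s) (Some y).
Proof. reflexivity. Qed.

Lemma wd_h x0 h s y : wdist n Q (stat mu) x0 h s y <> 0 -> h s y <> 0.
Proof.
  destruct s; simpl; intros H C; apply H; rewrite C; ring.
Qed.

Lemma chain x0 h a z : (forall y, wdist n Q (stat mu) x0 h a (Some y) <> 0 -> y = z) ->
  forall d y, wdist n Q (stat mu) x0 h (a + d) (Some y) <> 0 -> (rk y + d <= rk z)%nat.
Proof.
  intros Hb d. induction d; intros y H.
  - rewrite Nat.add_0_r in H. apply Hb in H. subst. lia.
  - rewrite Nat.add_succ_r, wd_S in H.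
    assert (Hs : sumN n (fun i => wdist n Q (stat mu) x0 h (a + d) (Some i) * trans Q i (mu i) (Some y)) <> 0).
    { intro C; apply H; rewrite C; ring. }
    apply sumN_nz in Hs. destruct Hs as [i [Hi Hne]].
    assert (H1 : wdist n Q (stat mu) x0 h (a + d) (Some i) <> 0) by (intro C; apply Hne; rewrite C; ring).
    assert (H2 : trans Q i (mu i) (Some y) <> 0) by (intro C; apply Hne; rewrite C; ring).
    apply IHd in H1. apply Hmu in H2; auto. lia.
Qed.

Lemma sd_zero x0 : (rk x0 < n)%nat -> forall K y, (n <= K)%nat ->
  state_dist n Q (stat mu) x0 K (Some y) = 0.
Proof.
  intros Hr K y HK. apply NNPP. intro H.
  assert (Hb : forall y, wdist n Q (stat mu) x0 (fun _ _ => 1) 0 (Some y) <> 0 -> y = x0).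
  { intros y' Hy. simpl in Hy. destruct (Nat.eq_dec y' x0); auto. exfalso; apply Hy; ring. }
  pose proof (chain x0 (fun _ _ => 1) 0 x0 Hb K y H). lia.
Qed.

Lemma mass_zero x0 h a b i : (a < b)%nat ->
  (forall y, h a (Some y) <> 0 -> y = i) -> (forall y, h b (Some y) <> 0 -> y = i) -> h b None = 0 ->
  mass n (wdist n Q (stat mu) x0 h b) = 0.
Proof.
  intros Hab Ha Hb Hn. unfold mass.
  assert (H0 : wdist n Q (stat mu) x0 h b None = 0).
  { apply NNPP; intro C. apply wd_h in C. auto. }
  rewrite H0, sumN_zero. ring.
  intros y _. apply NNPP. intro C.
  assert (Hbase : forall y, wdist n Q (stat mu) x0 h a (Some y) <> 0 -> y = i).
  { intros y' Hy. apply wd_h in Hy. auto. }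
  replace b with (a + (b - a))%nat in C by lia.
  pose proof (chain x0 h a i Hbase (b - a) y C).
  replace (a + (b - a))%nat with b in C by lia.
  apply wd_h, Hb in C. subst. lia.
Qed.

End Eval.

Lemma h_ind i a k k' y : (a = k \/ a = k')%nat ->
  (fun s y0 => if (Nat.eqb s k || Nat.eqb s k')%bool then ind_node i y0 else 1) a (Some y) <> 0 -> y = i.
Proof.
  intros Ha H. simpl in H.
  assert (Hb : (Nat.eqb a k || Nat.eqb a k')%bool = true).
  { destruct Ha; subst; rewrite Nat.eqb_refl; simpl; auto. apply Bool.orb_true_r. }
  rewrite Hb in H. destruct (Nat.eq_dec y i); auto. exfalso; apply H; reflexivity.
Qed.

Lemma h_none i a k k' : (a = k \/ a = k')%nat ->
  (fun s y0 => if (Nat.eqb s k || Nat.eqb s k')%bool then ind_node i y0 else 1) a None = 0.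
Proof.
  intros Ha. simpl.
  assert (Hb : (Nat.eqb a k || Nat.eqb a k')%bool = true).
  { destruct Ha; subst; rewrite Nat.eqb_refl; simpl; auto. apply Bool.orb_true_r. }
  rewrite Hb. reflexivity.
Qed.

Theorem proposition2
  (n : nat) (E : nat -> nat -> Prop) (w f : R) (Q Rw T S : nat -> nat -> R)
  (hE_dom : forall i j, E i j -> (i < n)%nat /\ (j < n)%nat)
  (hE_loop : forall i, (i < n)%nat -> E i i)
  (hE_conn : forall i j, (i < n)%nat -> (j < n)%nat ->
              clos_refl_sym_trans nat E i j)
  (hw : 0 < w) (hf : 0 < f)
  (hQ : forall i j, E i j -> 0 < Q i j)
  (hR : forall i j, E i j -> 0 < Rw i j)
  (hT : forall i j, E i j -> i <> j -> 0 < T i j)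
  (hS : forall i j, E i j -> i <> j -> 0 < S i j)
  (hSloop : forall i, (i < n)%nat -> S i i = 0)
  (hstand : forall j k, E j k -> j <> k ->
     Rw j k - w / Q j k <= Rmax (Rw j j - w / Q j j) (Rw k k - w / Q k k)) :
  exists mu : nat -> action,
    optimal_stationary n E w f Q Rw T S mu /\
    (forall i, (i < n)%nat -> fst (mu i) = Some i -> snd (mu i) = None) /\
    (forall x0 i k k', (x0 < n)%nat -> (i < n)%nat -> k <> k' ->
       prob_both n Q (stat mu) x0 i k k' = 0) /\
    (forall x0 i, (x0 < n)%nat -> (i < n)%nat -> state_dist n Q (stat mu) x0 n (Some i) = 0).
Proof.
  destruct (build_full n E w f Q Rw T S hE_dom hf hQ hT hS hSloop hstand)
    as [l [V [mu [rk [HI Hall]]]]].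
  destruct HI as [Hnd [Hlt [H1 _]]].
  assert (Hlen : (length l <= n)%nat).
  { rewrite <- (length_seq n 0). apply NoDup_incl_length; auto.
    intros x Hx. apply in_seq. specialize (Hlt x Hx). lia. }
  assert (HV0 : forall i, (i < n)%nat -> 0 <= V i) by (intros i Hi; apply H1; auto).
  assert (Hrk : forall i, (i < n)%nat -> (rk i < n)%nat).
  { intros i Hi. destruct (H1 i (Hall i Hi)) as [_ [_ [_ [_ [Hr _]]]]]. lia. }
  assert (Hadmle : forall i u, (i < n)%nat -> adm E T i u -> val w f Q Rw S V i u <= V i).
  { intros i u Hi Ha. destruct (H1 i (Hall i Hi)) as [_ [Hopt _]].
    destruct u as [[j|] t].
    - unfold adm in Ha; simpl in Ha. destruct Ha as [HE Ht]. destruct (Nat.eq_dec j i) as [->|Hne].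
      + destruct t as [t|]; simpl in Ht.
        * assert (Hw := Hopt (Some i, None) ltac:(unfold isopt; auto)).
          rewrite val_wait in Hw. unfold waitval in Hw.
          unfold val, reward, pm; simpl.
          set (e := exp (- (t * Q i i))).
          assert (0 < e) by apply exp_pos.
          assert (e <= 1) by (apply exp_neg_le1; left; apply Rmult_lt_0_compat; auto; apply hQ; auto).
          assert ((1 - e) * (Rw i i - (w + f * S i i) / Q i i) <= (1 - e) * V i)
            by (apply Rmult_le_compat_l; lra).
          lra.
        * apply Hopt. unfold isopt; auto.
      + simpl in Ht. subst t. apply Hopt. right; right. exists j. repeat split; auto.
        apply Hall. apply (hE_dom _ _ HE).
    - unfold val, reward; simpl. rewrite Rplus_0_r. apply HV0; auto. }
  assert (Hmuopt : forall i, (i < n)%nat -> isopt E T l i (mu i)).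
  { intros i Hi. apply H1; auto. }
  assert (Hadm : admissible n E T (stat mu)).
  { intros k i Hi. change (stat mu k i) with (mu i). destruct (Hmuopt i Hi) as [H|[H|[j [Hj [HE [Hne H]]]]]];
      rewrite H; unfold adm; simpl; auto.
    - split; auto. destruct (Nat.eq_dec i i); tauto.
    - split; auto. destruct (Nat.eq_dec j i); tauto. }
  assert (Hmu : forall i y, (i < n)%nat -> trans Q i (mu i) (Some y) <> 0 -> (rk y < rk i)%nat).
  { intros i y Hi Ht. destruct (H1 i (Hall i Hi)) as [_ [_ [Hm [_ [_ Hr]]]]].
    destruct Hm as [H|[H|[j [Hj [HE [Hne H]]]]]]; rewrite H in Ht, Hr; unfold trans, pm in Ht; simpl in Ht.
    - exfalso; auto.
    - exfalso. destruct (Nat.eq_dec y i); apply Ht; ring.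
    - destruct (Nat.eq_dec y j); [|exfalso; auto]. subst. apply Hr; auto. }
  assert (Hsd : forall x0, (x0 < n)%nat -> forall K y, (n <= K)%nat ->
     state_dist n Q (stat mu) x0 K (Some y) = 0).
  { intros x0 Hx. apply (sd_zero n Q mu rk Hmu). auto. }
  exists mu. split; [split|split; [|split]].
  - exact Hadm.
  - intros x0 Hx. exists (V x0). split.
    + intros eps Heps. exists n. intros K HK. unfold R_dist.
      pose proof (pv_eq n E w f Q Rw T S hE_dom (stat mu) x0 V Hx Hadm) as Heq.
      assert (HD : D n Q (stat mu) x0 V K = 0).
      { unfold D. apply sumN_zero. intros i Hi. rewrite Hsd; auto. ring. }
      rewrite <- (Heq ltac:(intros k i Hi; unfold stat; symmetry; apply H1; auto) K), HD.
      rewrite Rplus_0_r, Rminus_diag, Rabs_R0. exact Heps.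
    + intros pi v' Ha Hv. apply (lim_le _ _ _ Hv). intros K.
      pose proof (pv_bound n E w f Q Rw T S hE_dom pi x0 V Hx Ha
        ltac:(intros k i Hi; apply Hadmle; auto; apply Ha; auto) K).
      pose proof (D_nonneg n Q pi x0 V K HV0). lra.
  - intros i Hi Hf. destruct (Hmuopt i Hi) as [H|[H|[j [Hj [HE [Hne H]]]]]]; rewrite H in Hf |- *;
      simpl in *; try discriminate; auto.
    inversion Hf; subst; tauto.
  - intros x0 i k k' Hx Hi Hkk. unfold prob_both.
    destruct (Nat.lt_gt_cases k k') as [[Hlt'|Hgt] _]; [exact Hkk| |].
    + rewrite Nat.max_r by lia. apply (mass_zero n Q mu rk Hmu x0 _ k k' i); auto.
      * intros y; apply h_ind; auto.
      * intros y; apply h_ind; auto.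
      * apply h_none; auto.
    + rewrite Nat.max_l by lia. apply (mass_zero n Q mu rk Hmu x0 _ k' k i); auto.
      * intros y; apply h_ind; auto.
      * intros y; apply h_ind; auto.
      * apply h_none; auto.
  - intros x0 i Hx Hi. apply Hsd; auto.
Qed.
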